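(* Let $m>0$, $K\neq0$, and consider the CMC slicing of the Schwarzschild spacetime with integration constant $H=0$ (the case in which the second fundamental form of each slice is isotropic, $K_{ij}=\tfrac13 K g_{ij}$). Then every solution $\sigma_-$ of the ingoing wave phase equation on $(2m,\infty)$ is unbounded as $r\to 2m^+$; i.e. no bounded ingoing wave phase coordinate exists across the event horizon on such slices.
   Context: The CMC-sliced Schwarzschild metric is $ds^2=-(1-2m/r)dt^2+2vP^{-1/2}dt\,dr+r^4P^{-1}dr^2+r^2d\Omega^2$ with $v=Kr^3/3-H$, $P=v^2+(1-2m/r)r^4$, $K$ the mean curvature of the slices $t=$const, $H$ a real constant (here $H=0$). The ingoing wave phase equation is $(1-2m/r)\frac{3}{K}\frac{d\sigma_-}{dr}=vP^{-1/2}+b_-$ with $b_-=-1$ if $K<0$ and $b_-=+1$ if $K>0$. The trace-free part of the second fundamental form of the slices vanishes identically exactly when $H=0$. *)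

(* Defs.v *)
From Stdlib Require Import Reals.
Open Scope R_scope.

Definition vfun (K H r : R) : R := K * r ^ 3 / 3 - H.

Definition Pfun (m K H r : R) : R := (vfun K H r) ^ 2 + (1 - 2 * m / r) * r ^ 4.

Definition bminus (K : R) : R := if Rlt_dec K 0 then -1 else 1.

Definition ingoing_phase_solution (m K H : R) (sigma : R -> R) : Prop :=
  forall r : R, 2 * m < r ->
    exists d : R, derivable_pt_lim sigma r d /\
      (1 - 2 * m / r) * (3 / K) * d = vfun K H r / sqrt (Pfun m K H r) + bminus K.

(* Main.v *)
Require Import Defs.
From Stdlib Require Import Reals Lra Psatz ClassicalEpsilon.
Open Scope R_scope.

Lemma bminus_prop K : K <> 0 -> bminus K * bminus K = 1 /\ 0 < bminus K * K.
Proof. intros HK; unfold bminus; destruct (Rlt_dec K 0); split; try lra.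
Qed.

Lemma key_ineq m K r d : 0 < m -> K <> 0 -> 2*m < r ->
  (1 - 2 * m / r) * (3 / K) * d = vfun K 0 r / sqrt (Pfun m K 0 r) + bminus K ->
  bminus K * K * (2*m) / 3 / (r - 2*m) <= d.
Proof.
  intros Hm HK Hr E.
  destruct (bminus_prop K HK) as [Hs1 Hs2].
  set (s := bminus K) in *.
  assert (Hr0 : 0 < r) by lra.
  assert (Hv : 0 < s * vfun K 0 r).
  { unfold vfun. replace (s * (K * r ^ 3 / 3 - 0)) with ((s*K) * r^3 / 3) by (unfold Rdiv; ring).
    assert (0 < r^3) by (apply pow_lt; lra). apply Rmult_lt_0_compat; [|lra]. nra. }
  assert (H1 : 0 < 1 - 2*m/r).
  { apply Rlt_0_minus. apply (Rmult_lt_reg_r r); [lra|]. field_simplify; lra. }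
  assert (HP : 0 < Pfun m K 0 r).
  { unfold Pfun.
    assert (0 < r^4) by (apply pow_lt; lra).
    assert (vfun K 0 r ^ 2 = (s * vfun K 0 r)^2).
    { replace ((s * vfun K 0 r)^2) with ((s*s) * vfun K 0 r ^ 2) by ring. rewrite Hs1; ring. }
    assert (0 < (s * vfun K 0 r)^2) by (apply pow_lt; lra).
    nra. }
  set (q := sqrt (Pfun m K 0 r)) in *.
  assert (Hq : 0 < q) by (apply sqrt_lt_R0; exact HP).
  set (v := vfun K 0 r) in *.
  assert (HsR : 1 <= s * (v / q + s)).
  { replace (s * (v / q + s)) with ((s*v)/q + s*s) by (field; lra). rewrite Hs1.
    assert (0 < s*v/q) by (apply Rdiv_lt_0_compat; lra). lra. }
  assert (Hd : d = (v / q + s) * K * r / (3 * (r - 2*m))).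
  { rewrite <- E. field; repeat split; lra. }
  rewrite Hd.
  replace (((v / q + s) * K * r / (3 * (r - 2 * m))))
    with ((s * (v / q + s)) * ((s*K) * r / (3 * (r - 2 * m)))).
  2:{ transitivity ((s*s) * ((v / q + s) * K * r / (3 * (r - 2 * m)))).
        unfold Rdiv; ring. rewrite Hs1; ring. }
  set (A := s * (v / q + s)) in *.
  assert (Hrm : 0 < r - 2*m) by lra.
  unfold Rdiv.
  apply Rle_trans with (1 * (s * K * r * / (3 * (r - 2 * m)))).
  - rewrite Rmult_1_l. rewrite Rinv_mult.
    assert (0 < / (r - 2*m)) by (apply Rinv_0_lt_compat; lra).
    assert (0 < s*K * /(r-2*m)) by nra.
    nra.
  - apply Rmult_le_compat_r; [|lra].
    apply Rmult_le_pos. nra. left; apply Rinv_0_lt_compat; lra.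
Qed.

Theorem mainTheorem2 (m K : R) (sigma : R -> R) :
  0 < m -> K <> 0 ->
  ingoing_phase_solution m K 0 sigma ->
  ~ (exists M delta : R, 0 < delta /\
       forall r : R, 2 * m < r < 2 * m + delta -> Rabs (sigma r) <= M).
Proof.
  intros Hm HK Hsol [M [delta [Hdel Hb]]].
  destruct (bminus_prop K HK) as [_ Hs2].
  set (c := bminus K * K * (2*m) / 3).
  assert (Hc : 0 < c) by (unfold c; nra).
  set (P := fun r d => derivable_pt_lim sigma r d /\
      (1 - 2 * m / r) * (3 / K) * d = vfun K 0 r / sqrt (Pfun m K 0 r) + bminus K).
  set (D := fun r => epsilon (inhabits 0) (P r)).
  assert (HD : forall r, 2*m < r -> derivable_pt_lim sigma r (D r) /\ c / (r - 2*m) <= D r).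
  { intros r Hr. assert (HP : P r (D r)) by (apply epsilon_spec; apply Hsol; exact Hr).
    destruct HP as [H1 H2]. split; [exact H1|].
    unfold c. eapply Rle_trans; [|apply (key_ineq m K r); eauto]. right. field. lra. }
  assert (Hstep : forall x, 0 < x -> c / 2 <= sigma (2*m + x) - sigma (2*m + x/2)).
  { intros x Hx.
    destruct (MVT_cor2 sigma D (2*m + x/2) (2*m+x)) as [xi [Heq Hxi]]; [lra| |].
    { intros y Hy. apply HD. lra. }
    rewrite Heq. destruct (HD xi ltac:(lra)) as [_ Hle].
    assert (c / x <= c / (xi - 2*m)).
    { unfold Rdiv. apply Rmult_le_compat_l; [lra|]. apply Rinv_le_contravar; lra. }
    replace (2 * m + x - (2 * m + x / 2)) with (x/2) by field.
    apply Rle_trans with (c / x * (x/2)).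
    - right. field. lra.
    - apply Rmult_le_compat_r; lra. }
  assert (Hind : forall y, 0 < y -> forall n, INR n * (c/2) <= sigma (2*m + y) - sigma (2*m + y / 2^n)).
  { intros y Hy n. induction n.
    - simpl. replace (y/1) with y by field. lra.
    - rewrite S_INR.
      assert (0 < 2^n) by (apply pow_lt; lra).
      assert (0 < y / 2^n) by (apply Rdiv_lt_0_compat; lra).
      specialize (Hstep (y/2^n) H0).
      replace (y / 2 ^ S n) with (y / 2^n / 2) by (simpl; field; lra).
      lra. }
  destruct (INR_archimed (c/2) (2*M)) as [n Hn]; [lra|].
  assert (Hy : 0 < delta/2) by lra.
  specialize (Hind _ Hy n).
  assert (0 < 2^n) by (apply pow_lt; lra).
  assert (Hpos : 0 < delta/2/2^n) by (apply Rdiv_lt_0_compat; lra).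
  assert (delta/2/2^n <= delta/2).
  { unfold Rdiv at 1. rewrite <- (Rmult_1_r (delta/2)) at 2.
    apply Rmult_le_compat_l; [lra|]. rewrite <- Rinv_1. apply Rinv_le_contravar; [lra|].
    apply pow_R1_Rle. lra. }
  assert (A1 := Hb (2*m + delta/2) ltac:(lra)).
  assert (A2 := Hb (2*m + delta/2/2^n) ltac:(lra)).
  revert A1 A2; unfold Rabs; do 2 destruct Rcase_abs; intros; lra.
Qed.
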